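(* Let $P$ be a probability distribution of a random variable $\xi$, let $\mathcal X\subseteq\mathbb R^d$, and let $\lambda>0$. Assume: (i) for every $\xi$, the loss $x\mapsto \ell(x;\xi)$ is $G$-Lipschitz continuous and $L$-smooth on $\mathcal X$; (ii) $\psi:\mathbb R\to[0,+\infty]$ is convex, $\psi(1)=0$, $\psi(t)=+\infty$ for all $t<0$, and its conjugate $\psi^*(t)=\sup_{s\in\mathbb R}(st-\psi(s))$ is $M$-smooth. Define $$\mathcal L(x,\eta)=\mathbb E_{\xi\sim P}\Big[\lambda\psi^*\Big(\frac{\ell(x;\xi)-\eta}{\lambda}\Big)+\eta\Big],\qquad \Psi(x)=\min_{\eta\in\mathbb R}\mathcal L(x,\eta).$$ Then $\Psi$ is differentiable, and $\nabla\Psi(x)=\nabla_x\mathcal L(x,\eta)$ for any $\eta\in\arg\min_{\eta'\in\mathbb R}\mathcal L(x,\eta')$.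
   Context: $\Psi$ is the (dual form of the) penalized $\psi$-divergence distributionally robust optimization objective $\sup_Q\{\mathbb E_{\xi\sim Q}\ell(x;\xi)-\lambda d_\psi(Q,P)\}$, where $d_\psi(Q,P)=\int\psi(dQ/dP)\,dP$. A function is $L$-smooth if it is differentiable with $L$-Lipschitz gradient. *)

(* Defs.v *)
From HB Require Import structures.
From mathcomp Require Import all_boot all_order all_algebra.
From mathcomp Require Import all_classical all_reals all_analysis.
Set Implicit Arguments. Unset Strict Implicit. Unset Printing Implicit Defensive.
Import Order.TTheory GRing.Theory Num.Theory.
Import numFieldNormedType.Exports.
Local Open Scope classical_set_scope.
Local Open Scope ring_scope.

Definition enorm (R : realType) (d : nat) (v : 'rV[R]_d) : R :=
  Num.sqrt (\sum_(i < d) v ord0 i ^+ 2).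

Definition eucl_lipschitz_on (R : realType) (d : nat) (G : R)
    (X : set 'rV[R]_d) (f : 'rV[R]_d -> R) : Prop :=
  forall x y, X x -> X y -> `|f x - f y| <= G * enorm (x - y).

(* f is L-smooth on X: differentiable at every point of X, and its gradient
   is L-Lipschitz on X w.r.t. the Euclidean norm (the dual norm of the
   gradient difference is expressed through the differentials). *)
Definition eucl_smooth_on (R : realType) (d : nat) (L : R)
    (X : set 'rV[R]_d) (f : 'rV[R]_d -> R) : Prop :=
  (forall x, X x -> differentiable f x) /\
  (forall x y, X x -> X y -> forall h : 'rV[R]_d,
      `|'d f x h - 'd f y h| <= L * enorm (x - y) * enorm h).

Definition smooth1_real (R : realType) (M : R) (f : R -> R) : Prop :=
  (forall t, derivable f t 1) /\
  (forall s t, `|derive1 f s - derive1 f t| <= M * `|s - t|).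

Definition convex_ext (R : realType) (psi : R -> \bar R) : Prop :=
  forall (s t a : R), 0 <= a <= 1 ->
    (psi (a * s + (1 - a) * t)%R <= a%:E * psi s + (1 - a)%R%:E * psi t)%E.

Definition conj_ext (R : realType) (psi : R -> \bar R) (t : R) : \bar R :=
  ereal_sup [set ((s * t)%:E - psi s)%E | s in [set: R]].

(* real-valued version (meaningful when psi^* is finite everywhere) *)
Definition conj_real (R : realType) (psi : R -> \bar R) (t : R) : R :=
  fine (conj_ext psi t).

Definition dro_L (R : realType) (d : nat) (d0 : measure_display)
    (T : measurableType d0) (P : probability T R)
    (psi : R -> \bar R) (lam : R) (loss : 'rV[R]_d -> T -> R)
    (x : 'rV[R]_d) (eta : R) : R :=
  fine (\int[P]_xi
          (lam * conj_real psi ((loss x xi - eta) / lam) + eta)%:E)%E.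

Definition dro_Psi (R : realType) (d : nat) (d0 : measure_display)
    (T : measurableType d0) (P : probability T R)
    (psi : R -> \bar R) (lam : R) (loss : 'rV[R]_d -> T -> R)
    (x : 'rV[R]_d) : R :=
  inf [set dro_L P psi lam loss x eta | eta in [set: R]].

(* Main.v *)
Require Import Defs.
From HB Require Import structures.
From mathcomp Require Import all_boot all_order all_algebra.
From mathcomp Require Import all_classical all_reals all_analysis.
From mathcomp Require Import ring lra.
From mathcomp Require Import measurable_realfun.
Import Order.TTheory GRing.Theory Num.Theory.
Import numFieldNormedType.Exports.
Local Open Scope classical_set_scope.
Local Open Scope ring_scope.

Section H1.
Context {R : realType}.

Lemma taylor_core (f : R -> R) K a b c :
  (forall s t, `|derive1 f s - derive1 f t| <= K * `|s - t|) ->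
  `|c - a| <= `|b - a| -> f b - f a = derive1 f c * (b - a) ->
  `|f b - f a - derive1 f a * (b - a)| <= `|K| * (b - a) ^+ 2.
Proof.
move=> HK hc ->.
rewrite -mulrBl normrM -real_normK ?num_real // mulrA ler_wpM2r //.
apply: (le_trans (HK _ _)).
have K0 : K <= `|K| by apply: real_ler_norm; apply: num_real.
have [K0'|K0'] := leP 0 K.
  by rewrite (ger0_norm K0'); apply: ler_wpM2l.
apply: (le_trans (y := 0)); first exact: mulr_le0_ge0 (ltW K0') (normr_ge0 _).
by rewrite mulr_ge0.
Qed.

Lemma taylor1 (f : R -> R) K :
  (forall t, derivable f t 1) ->
  (forall s t, `|derive1 f s - derive1 f t| <= K * `|s - t|) ->
  forall a b, `|f b - f a - derive1 f a * (b - a)| <= `|K| * (b - a) ^+ 2.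
Proof.
move=> df HK a b.
have isd : forall x : R, is_derive x (1:R) f (derive1 f x).
  by move=> x; rewrite derive1E; apply: derivableP.
have cont : forall u v, {within `[u, v], continuous f}.
  by move=> u v; apply: derivable_within_continuous => z _; exact: df.
have [ab|ba] := leP a b.
  have [c cab e] := MVT_segment ab (fun x _ => isd x) (cont a b).
  apply: taylor_core HK _ e.
  move: cab; rewrite in_itv /= => /andP[h1 h2].
  by rewrite !ger0_norm ?subr_ge0 // lerB.
have [c cab e] := MVT_segment (ltW ba) (fun x _ => isd x) (cont b a).
move: cab; rewrite in_itv /= => /andP[h1 h2].
have e' : f b - f a = derive1 f c * (b - a).
  by rewrite -opprB e -mulrN opprB.
apply: taylor_core HK _ e'.
rewrite distrC [`|b - a|]distrC !ger0_norm ?subr_ge0 //; last exact: ltW.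
by rewrite lerB.
Qed.

End H1.

Section H2.
Context {R : realType}.

Lemma conj_chord (psi : R -> \bar R) :
  (forall t, (0 <= psi t)%E) -> (forall t, conj_ext psi t \is a fin_num) ->
  forall a b th, 0 <= th -> th <= 1 ->
  conj_real psi (th * b + (1 - th) * a) <=
    th * conj_real psi b + (1 - th) * conj_real psi a.
Proof.
move=> psi0 fin a b th th0 th1.
have E t : conj_ext psi t = (conj_real psi t)%:E by rewrite /conj_real fineK.
rewrite -lee_fin -E; apply: ge_ereal_sup => y [s _ <-].
case Hs: (psi s) => [r| |].
- have hb : s * b - r <= conj_real psi b.
    by rewrite -lee_fin -E; apply: ereal_sup_ubound; exists s => //; rewrite Hs.
  have ha : s * a - r <= conj_real psi a.
    by rewrite -lee_fin -E; apply: ereal_sup_ubound; exists s => //; rewrite Hs.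
  rewrite -EFinB lee_fin.
  have -> : s * (th * b + (1 - th) * a) - r =
            th * (s * b - r) + (1 - th) * (s * a - r) by ring.
  apply: lerD; apply: ler_wpM2l => //; lra.
- by rewrite /= leNye.
- by move: (psi0 s); rewrite Hs.
Qed.

Lemma conj_tangent (psi : R -> \bar R) M :
  (forall t, (0 <= psi t)%E) -> (forall t, conj_ext psi t \is a fin_num) ->
  smooth1_real M (conj_real psi) ->
  forall a b, conj_real psi a + derive1 (conj_real psi) a * (b - a)
              <= conj_real psi b.
Proof.
move=> psi0 fin [df HM] a b.
set c := conj_real psi; set c' := derive1 c.
have T := @taylor1 _ _ _ df HM.
rewrite -lerBrDl; apply/ler_addgt0Pr => e e0.
set q := `|M| * (b - a) ^+ 2.
have q0 : 0 <= q by rewrite mulr_ge0 // sqr_ge0.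
set t := Num.min 1 (e / (q + 1)).
have t0 : 0 < t by rewrite lt_min ltr01 divr_gt0 // ltr_wpDl.
have t1 : t <= 1 by rewrite ge_min lexx.
have te : t * q <= e.
  have : t <= e / (q + 1) by rewrite ge_min lexx orbT.
  rewrite ler_pdivlMr ?ltr_wpDl // => h.
  apply: le_trans h; apply: ler_wpM2l; [exact: ltW | lra].
have ch := @conj_chord psi psi0 fin a b t (ltW t0) t1.
have := T a (t * b + (1 - t) * a).
have -> : t * b + (1 - t) * a - a = t * (b - a) by ring.
rewrite -/c -/c' => /ler_normlP [h1 _].
have H : t * (c' a * (b - a)) <= t * (c b - c a + e).
  have e1 : `|M| * (t * (b - a)) ^+ 2 = t * (t * q) by rewrite /q; ring.
  rewrite e1 in h1.
  have : t * (c' a * (b - a)) <= t * (c b - c a) + t * (t * q).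
    move: ch h1; rewrite -/c => ch h1; lra.
  move=> h; apply: (le_trans h); rewrite [X in _ <= X]mulrDr; apply: lerD => //; apply: ler_wpM2l => //; exact: ltW.
by move: H; rewrite ler_pM2l.
Qed.

End H2.

Section H3.
Context {R : realType} {V : normedModType R}.

Lemma diff_quad (f : V -> R) (D : {linear V -> R}) (x : V) K r :
  continuous D -> 0 < r ->
  (forall h, `|h| < r -> `|f (x + h) - f x - D h| <= K * `|h| ^+ 2) ->
  differentiable f x /\ 'd f x = D :> (V -> R).
Proof.
move=> cD r0 H.
have E : f \o shift x = cst (f x) + D +o_ 0 id.
  apply/eqaddoP => e e0.
  have m0 : 0 < Num.min r (e / (`|K| + 1)).
    by rewrite lt_min r0 divr_gt0 // ltr_wpDl.
  near=> h.
  have hm : `|h| < Num.min r (e / (`|K| + 1)) by near: h; exact: nbhs0_lt.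
  move: hm; rewrite lt_min => /andP[hr he].
  have := H h hr.
  have -> : (f \o shift x - (cst (f x) + D)) h = f (x + h) - f x - D h.
    by rewrite !fctE /= [h + x]addrC opprD addrA.
  move=> Hh.
  apply: (le_trans Hh).
  rewrite expr2 mulrA ler_wpM2r //.
  apply: (le_trans (y := (`|K| + 1) * `|h|)).
    apply: ler_wpM2r => //; apply: (le_trans (real_ler_norm (num_real K))).
    by rewrite lerDl.
  by rewrite mulrC -ler_pdivlMr ?ltr_wpDl // ltW.
have dD := diff_unique cD E.
split => //; apply/diff_locallyP; rewrite dD; split => //.
Unshelve. all: by end_near.
Qed.

End H3.

Section H4.
Context {R : realType} {d : nat}.
Implicit Types v : 'rV[R]_d.

Lemma enorm_ge0 v : 0 <= enorm v.
Proof. exact: sqrtr_ge0. Qed.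

Lemma coord_le_norm v i : `|v ord0 i| <= `|v|.
Proof.
have /mapP[j Hj ->] : `|v ord0 i| \in [seq `|v x.1 x.2| | x : 'I_1 * 'I_d].
  by apply/mapP; exists (ord0, i) => //=; rewrite mem_enum.
by rewrite [leRHS]/Num.norm /= mx_normrE; apply/bigmax_geP; right => /=; exists j.
Qed.

Lemma enormZ (k : R) v : enorm (k *: v) = `|k| * enorm v.
Proof.
rewrite /enorm -sqrtr_sqr -sqrtrM ?sqr_ge0 //; congr Num.sqrt.
rewrite mulr_sumr; apply: eq_bigr => i _; rewrite mxE exprMn //.
Qed.

Lemma enorm_le v : enorm v <= d%:R * `|v|.
Proof.
rewrite /enorm.
have H : \sum_(i < d) v ord0 i ^+ 2 <= (d%:R * `|v|) ^+ 2.
  apply: (le_trans (y := \sum_(i < d) `|v| ^+ 2)).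
    apply: ler_sum => i _; rewrite -real_normK ?num_real //.
    apply: lerXn2r; rewrite ?nnegrE //; exact: coord_le_norm.
  rewrite sumr_const card_ord exprMn -[_ *+ d]mulr_natl; apply: ler_wpM2r; rewrite ?sqr_ge0 //.
  case: (d) => [|n]; first by rewrite expr2 mul0r.
  by rewrite expr2 ler_peMl // ?ler1n // ler0n.
rewrite -ler_sqrt ?sqr_ge0 // in H.
by apply: (le_trans H); rewrite sqrtr_sqr ger0_norm ?mulr_ge0.
Qed.

End H4.

Section H5.
Context {R : realType}.

Lemma cvg_bound (u : R^nat) l C :
  (forall n, `|u n - l| <= C * harmonic n) -> u @ \oo --> l.
Proof.
move=> H; apply/cvgrPdist_le => e e0.
have e1 : 0 < e / (`|C| + 1) by rewrite divr_gt0 // ltr_wpDl.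
have := @cvg_harmonic R; move/cvgrPdist_le => /(_ _ e1).
apply: filterS => n; rewrite sub0r normrN ger0_norm ?harmonic_ge0 // => hn.
rewrite distrC; apply: (le_trans (H n)).
apply: (le_trans (y := (`|C| + 1) * harmonic n)).
  apply: ler_wpM2r; first exact: harmonic_ge0.
  by apply: (le_trans (real_ler_norm (num_real C))); rewrite lerDl.
by rewrite mulrC -ler_pdivlMr ?ltr_wpDl.
Qed.

Context {d : nat}.
Local Notation V := 'rV[R]_d.

Lemma dir_derive (f : V -> R) (x h : V) (t : R) :
  differentiable f (x + t *: h) ->
  is_derive t (1:R) (fun s => f (x + s *: h)) ('d f (x + t *: h) h).
Proof.
move=> df.
have E : (fun s : R => s^-1 *: ((fun s => f (x + s *: h)) (s *: (1:R) + t)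
                                 - (fun s => f (x + s *: h)) t))
       = (fun s : R => s^-1 *: (f (s *: h + (x + t *: h)) - f (x + t *: h))).
  apply: funext => s /=; congr (_ *: (f _ - _)).
  by rewrite -[s%:A]/(s * 1) mulr1 scalerDl addrCA.
apply: DeriveDef.
  by rewrite /derivable E; exact: diff_derivable.
by rewrite /derive E; exact: deriveE.
Qed.

Variables (X : set V) (G L : R) (f : V -> R) (x : V) (r : R).
Hypothesis Hlip : eucl_lipschitz_on G X f.
Hypothesis Hsm : eucl_smooth_on L X f.
Hypothesis r0 : 0 < r.
Hypothesis HB : forall h, `|h| < r -> X (x + h).

Lemma HBt h (t : R) : `|h| < r -> 0 <= t <= 1 -> X (x + t *: h).
Proof.
move=> hr /andP[t0 t1]; apply: HB; rewrite normrZ ger0_norm //.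
by apply: le_lt_trans hr; rewrite ler_piMl.
Qed.

Lemma loss_taylor h : `|h| < r ->
  `|f (x + h) - f x - 'd f x h| <= `|L| * enorm h ^+ 2.
Proof.
move=> hr.
have dfx (t : R) : 0 <= t <= 1 -> is_derive t (1:R) (fun s => f (x + s *: h))
   ('d f (x + t *: h) h).
  by move=> ht; apply: dir_derive; apply: Hsm.1; exact: HBt.
have cont : {within `[0, 1], continuous (fun s => f (x + s *: h))}.
  apply: derivable_within_continuous => z; rewrite in_itv /= => hz.
  by have [] := dfx z hz.
have oc (t : R) : t \in `]0, 1[ -> 0 <= t <= 1.
  by rewrite in_itv /= => /andP[a b]; rewrite !ltW.
have [c] := MVT_segment ler01 (fun t ht => dfx t (oc t ht)) cont.
rewrite in_itv /= scale1r scale0r addr0 subr0 mulr1 => hc ->.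
have Xc := HBt h c hr hc; have X0 : X x by rewrite -[x]addr0; apply: HB; rewrite normr0.
apply: (le_trans (Hsm.2 _ _ Xc X0 h)).
rewrite addrAC subrr add0r enormZ expr2 mulrA.
rewrite mulrA; apply: ler_wpM2r; first exact: enorm_ge0.
move: hc => /andP[c0 c1].
rewrite ger0_norm // -mulrA; apply: (le_trans (real_ler_norm (num_real _))).
rewrite normrM ler_wpM2l //.
by rewrite ger0_norm ?mulr_ge0 ?enorm_ge0 // ler_piMl // enorm_ge0.
Qed.

Lemma X0 : X x.
Proof. by rewrite -[x]addr0; apply: HB; rewrite normr0. Qed.

Lemma loss_dbound_small h : `|h| < r ->
  `|'d f x h| <= `|G| * enorm h + `|L| * enorm h ^+ 2.
Proof.
move=> hr.
have T := loss_taylor _ hr.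
have Lp : `|f (x + h) - f x| <= `|G| * enorm h.
  apply: (le_trans (Hlip _ _ (HB _ hr) X0)); rewrite addrAC subrr add0r.
  by apply: ler_wpM2r; [exact: enorm_ge0 | exact: real_ler_norm (num_real G)].
have -> : 'd f x h = (f (x + h) - f x) - (f (x + h) - f x - 'd f x h) by ring.
by apply: (le_trans (ler_normB _ _)); apply: lerD.
Qed.

Definition sc (h : V) := r / (2 * (`|h| + 1)).

Lemma sc_gt0 h : 0 < sc h.
Proof. by rewrite divr_gt0 // mulr_gt0 // ltr_wpDl. Qed.

Lemma sc_small h t : 0 < t <= sc h -> `|t *: h| < r.
Proof.
move=> /andP[t0 ts]; rewrite normrZ gtr0_norm //.
apply: (le_lt_trans (y := sc h * `|h|)); first by apply: ler_wpM2r.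
rewrite /sc mulrAC ltr_pdivrMr ?mulr_gt0 ?ltr_wpDl //.
rewrite ltr_pM2l //; have := normr_ge0 h; lra.
Qed.

Definition Bd := `|G| * (d%:R * r) + `|L| * (d%:R * r) ^+ 2.

Lemma loss_dbound h : `|'d f x h| <= (sc h)^-1 * Bd.
Proof.
have s0 := sc_gt0 h.
have sh : `|sc h *: h| < r by apply: sc_small; rewrite s0 lexx.
have E : 'd f x h = (sc h)^-1 * 'd f x (sc h *: h).
  by rewrite linearZ /= mulrA mulVf ?mul1r // gt_eqF.
have si : 0 <= (sc h)^-1 by rewrite invr_ge0 ltW.
rewrite E normrM (ger0_norm si); apply: ler_wpM2l => //.
apply: (le_trans (loss_dbound_small _ sh)).
have en : enorm (sc h *: h) <= d%:R * r.
  apply: (le_trans (enorm_le _)); apply: ler_wpM2l => //; exact: ltW.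
rewrite /Bd; apply: lerD; apply: ler_wpM2l => //.
by apply: lerXn2r; rewrite ?nnegrE ?enorm_ge0 ?mulr_ge0 // ltW.
Qed.

Lemma loss_dcvg h :
  (fun n => (f (x + (sc h * harmonic n) *: h) - f x) / (sc h * harmonic n))
    @ \oo --> 'd f x h.
Proof.
apply: (@cvg_bound _ _ (`|L| * sc h * enorm h ^+ 2)) => n.
set t := sc h * harmonic n.
have t0 : 0 < t by rewrite mulr_gt0 ?sc_gt0 ?harmonic_gt0.
have ts : t <= sc h.
  rewrite /t ler_piMr ?harmonic_ge0 //=; [exact: ltW (sc_gt0 h) | by rewrite invf_le1 // ler1n].
have th : `|t *: h| < r by apply: sc_small; rewrite t0 ts.
have T := loss_taylor _ th.
have E : (f (x + t *: h) - f x) / t - 'd f x h =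
         (f (x + t *: h) - f x - 'd f x (t *: h)) / t.
  have -> : 'd f x (t *: h) = t * 'd f x h by rewrite linearZ.
  by field; rewrite gt_eqF.
have ti : 0 <= t^-1 by rewrite invr_ge0 ltW.
rewrite E normrM (ger0_norm ti).
rewrite ler_pdivrMr // (le_trans T) //.
rewrite enormZ (gtr0_norm t0) /t le_eqVlt; apply/orP; left; apply/eqP; ring.
Qed.

End H5.

Section H6.
Context {R : realType} {d0 : measure_display} {T : measurableType d0}
  (P : probability T R).
Implicit Types f g : T -> R.
Set Implicit Arguments.

Definition Int (f : T -> R) := P.-integrable setT (EFin \o f).
Definition Ri (f : T -> R) := \int[P]_(x in setT) f x.

Lemma Int_meas f : Int f -> measurable_fun setT f.
Proof. by move=> /integrableP[/measurable_EFinP]. Qed.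

Lemma Int_cst k : Int (fun=> k).
Proof. exact: finite_measure_integrable_cst. Qed.

Lemma Int_ext f g : (forall x, f x = g x) -> Int f -> Int g.
Proof. by move=> fg; apply: (eq_integrable measurableT) => x _ /=; rewrite fg. Qed.

Lemma Int_dom f g : measurable_fun setT f -> Int g ->
  (forall x, `|f x| <= g x) -> Int f.
Proof.
move=> mf ig fg; apply: (le_integrable measurableT) ig.
  exact/measurable_EFinP.
move=> x _ /=; rewrite lee_fin; apply: (le_trans (fg x)).
exact: real_ler_norm (num_real _).
Qed.

Lemma Int_D f g : Int f -> Int g -> Int (fun x => f x + g x).
Proof. by move=> a b; apply: Int_ext (integrableD measurableT a b). Qed.

Lemma Int_B f g : Int f -> Int g -> Int (fun x => f x - g x).
Proof. by move=> a b; apply: Int_ext (integrableB measurableT a b). Qed.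

Lemma Int_Z k f : Int f -> Int (fun x => k * f x).
Proof. by move=> a; apply: Int_ext (integrableZl measurableT k a). Qed.

Lemma Int_abs f : Int f -> Int (fun x => `|f x|).
Proof.
by move=> a; apply: Int_ext (integrable_norm a).
Qed.

Lemma meas_D f g : measurable_fun setT f -> measurable_fun setT g ->
  measurable_fun setT (fun x => f x + g x).
Proof. exact: measurable_funD. Qed.

Lemma meas_M f g : measurable_fun setT f -> measurable_fun setT g ->
  measurable_fun setT (fun x => f x * g x).
Proof. exact: measurable_funM. Qed.

Lemma Int_Mb f g K : Int f -> measurable_fun setT g ->
  (forall x, `|g x| <= K) -> Int (fun x => f x * g x).
Proof.
move=> fi mg gK; apply: (@Int_dom _ (fun x => K * `|f x|)).
- exact: meas_M (Int_meas fi) mg.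
- exact: Int_Z (Int_abs fi).
- move=> x; rewrite normrM mulrC; apply: ler_wpM2r => //.
Qed.

Lemma Ri_D f g : Int f -> Int g -> Ri (fun x => f x + g x) = Ri f + Ri g.
Proof. exact: RintegralD. Qed.

Lemma Ri_B f g : Int f -> Int g -> Ri (fun x => f x - g x) = Ri f - Ri g.
Proof. exact: RintegralB. Qed.

Lemma Ri_Z k f : Int f -> Ri (fun x => k * f x) = k * Ri f.
Proof. exact: RintegralZl. Qed.

Lemma Ri_cst k : Ri (fun=> k) = k.
Proof. rewrite /Ri Rintegral_cst //. have h1 : P setT = 1%E := probability_setT P. rewrite [X in fine X]h1 mulr1 //. Qed.

Lemma Ri_ext f g : (forall x, f x = g x) -> Ri f = Ri g.
Proof. by move=> fg; rewrite /Ri; congr Rintegral; apply: funext. Qed.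

Lemma Ri_le f g : Int f -> Int g -> (forall x, f x <= g x) -> Ri f <= Ri g.
Proof. by move=> a b fg; apply: le_Rintegral => // x _; exact: fg. Qed.

Lemma Ri_abs_le f g : Int f -> Int g -> (forall x, `|f x| <= g x) ->
  `|Ri f| <= Ri g.
Proof.
move=> a b fg; apply: (le_trans (le_normr_Rintegral _ a)) => //.
exact: Ri_le (Int_abs a) b fg.
Qed.

End H6.

Lemma linear_ext (R : realType) (U : normedModType R) (f g : {linear U -> R}) :
  (f : U -> R) = g -> f = g.
Proof.
move: f g => [f [[af] [lf]]] [g [[ag] [lg]]] /= fg.
subst g.
have -> : af = ag by apply: Prop_irrelevance.
have -> : lf = lg by apply: Prop_irrelevance.
by [].
Qed.

Lemma nabs {R : realType} (v : R) : - `|v| <= v /\ v <= `|v|.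
Proof. by split; [rewrite lerNl -normrN; exact: ler_norm | exact: ler_norm]. Qed.

Lemma le0_of_small {R : realType} (q K : R) :
  (forall t, 0 < t -> q <= K * t) -> q <= 0.
Proof.
move=> H; apply/ler_addgt0Pr => e e0; rewrite add0r.
have k1 : 0 < `|K| + 1 by rewrite ltr_wpDl.
have t0 : 0 < e / (`|K| + 1) by rewrite divr_gt0.
apply: (le_trans (H _ t0)).
apply: (le_trans (real_ler_norm (num_real _))).
rewrite normrM (gtr0_norm t0) mulrA ler_pdivrMr // mulrDr mulr1 [e * _]mulrC lerDl ltW //.
Qed.

Section H7.
Context {R : realType} {d : nat} {d0 : measure_display} {T : measurableType d0}
  (P : probability T R).
Variables (X : set 'rV[R]_d) (lam G L M : R) (loss : 'rV[R]_d -> T -> R)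
  (psi : R -> \bar R).
Hypothesis lam0 : 0 < lam.
Hypothesis Hlip : forall xi, eucl_lipschitz_on G X (fun x => loss x xi).
Hypothesis Hsm : forall xi, eucl_smooth_on L X (fun x => loss x xi).
Hypothesis psi0 : forall t, (0 <= psi t)%E.
Hypothesis fin : forall t, conj_ext psi t \is a fin_num.
Hypothesis Hc : smooth1_real M (conj_real psi).
Hypothesis mloss : forall x, X x -> measurable_fun setT (loss x).
Hypothesis Hint : forall x eta, X x ->
     P.-integrable [set: T]
       (fun xi => (lam * conj_real psi ((loss x xi - eta) / lam) + eta)%:E).

Local Notation c := (conj_real psi).
Local Notation c' := (derive1 (conj_real psi)).
Definition aa y e xi := (loss y xi - e) / lam.
Local Notation F y e := (dro_L P psi lam loss y e).

Lemma F_E y e : F y e = Ri P (fun xi => lam * c (aa y e xi) + e).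
Proof. by []. Qed.

Lemma Int_g y e : X y -> Int P (fun xi => lam * c (aa y e xi) + e).
Proof. exact: Hint. Qed.

Lemma Int_c y e : X y -> Int P (fun xi => c (aa y e xi)).
Proof.
move=> Xy; apply: Int_ext (Int_Z lam^-1 (Int_B (Int_g e Xy) (Int_cst P e))).
by move=> xi /=; field; rewrite gt_eqF.
Qed.

Lemma meas_aa y e : X y -> measurable_fun setT (aa y e).
Proof.
move=> Xy; apply: (meas_M (f := fun xi => loss y xi - e) (g := fun=> lam^-1)).
  exact: measurable_funB (mloss Xy) (measurable_cst _).
exact: measurable_cst.
Qed.

Lemma c'_cont : continuous c'.
Proof.
move=> t; apply/cvgrPdist_le => e e0.
have k1 : 0 < e / (`|M| + 1) by rewrite divr_gt0 // ltr_wpDl.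
have hs : \forall s \near t, `|t - s| < e / (`|M| + 1).
  exact: (@cvgr_dist_lt _ _ _ _ _ id t cvg_id _ k1).
apply: filterS hs => s hs.
apply: (le_trans (Hc.2 _ _)).
apply: (le_trans (real_ler_norm (num_real _))).
rewrite normrM normr_id.
apply: (le_trans (y := `|M| * (e / (`|M| + 1)))).
  by apply: ler_wpM2l => //; exact: ltW.
rewrite mulrA ler_pdivrMr ?ltr_wpDl // mulrDr mulr1 [e * _]mulrC lerDl ltW //.
Qed.

Lemma meas_w y e : X y -> measurable_fun setT (fun xi => c' (aa y e xi)).
Proof.
move=> Xy; apply: (measurableT_comp (f := c') (g := aa y e)).
  exact: continuous_measurable_fun c'_cont.
exact: meas_aa.
Qed.

Lemma c'_bound a : `|c' a| <= `|c (a + 1)| + `|c (a - 1)| + 2 * `|c a| + `|M|.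
Proof.
have T1 := @taylor1 _ _ _ Hc.1 Hc.2 a (a + 1).
have T2 := @taylor1 _ _ _ Hc.1 Hc.2 a (a - 1).
rewrite [a + 1 - a]addrC addKr expr1n mulr1 mulr1 in T1.
rewrite [a - 1 - a]addrC addKr sqrrN expr1n mulr1 mulrN1 in T2.
move: T1 T2 => /ler_normlP[T1 T1'] /ler_normlP[T2 T2'].
have [m1 n1] := nabs (c (a + 1)).
have [m2 n2] := nabs (c (a - 1)).
have [m3 n3] := nabs (c a).
apply/ler_normlP; split; lra.
Qed.

Lemma aa_shift y e xi k : aa y (e - lam * k) xi = aa y e xi + k.
Proof. by rewrite /aa; field; rewrite gt_eqF. Qed.

Lemma Int_w y e : X y -> Int P (fun xi => c' (aa y e xi)).
Proof.
move=> Xy.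
apply: (Int_dom (meas_w e Xy) _ (fun xi => c'_bound (aa y e xi))).
apply: Int_D; last exact: Int_cst.
apply: Int_D; last exact: Int_Z (Int_abs (Int_c e Xy)).
apply: Int_D.
  apply: Int_abs; apply: Int_ext (Int_c (e - lam * 1) Xy) => xi.
  by rewrite aa_shift.
apply: Int_abs; apply: Int_ext (Int_c (e - lam * (-1)) Xy) => xi.
by rewrite aa_shift.
Qed.

Lemma foc x e : X x -> (forall e', F x e <= F x e') ->
  Ri P (fun xi => c' (aa x e xi)) = 1.
Proof.
move=> Xx Hmin.
set W := Ri P (fun xi => c' (aa x e xi)).
set k := `|M| / lam.
have key dl : 0 <= dl * (1 - W) + k * dl ^+ 2.
  have := Hmin (e + dl); rewrite !F_E -subr_ge0 -Ri_B ?Int_g // => h.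
  apply: (le_trans h).
  have -> : dl * (1 - W) + k * dl ^+ 2 =
      Ri P (fun xi => (dl - dl * c' (aa x e xi)) + k * dl ^+ 2).
    have iw := Int_w e Xx.
    have i1 : Int P (fun xi => dl - dl * c' (aa x e xi)).
      exact: Int_B (Int_cst P dl) (Int_Z dl iw).
    rewrite (Ri_D i1 (Int_cst P _)) (Ri_B (Int_cst P _) (Int_Z dl iw)).
    by rewrite (Ri_Z dl iw) !Ri_cst mulrBr mulr1.
  apply: Ri_le; first exact: Int_B (Int_g _ Xx) (Int_g _ Xx).
    apply: Int_D; last exact: Int_cst.
    exact: Int_B (Int_cst _ _) (Int_Z _ (Int_w e Xx)).
  move=> xi.
  set a := aa x e xi.
  have ab : aa x (e + dl) xi = a - dl / lam by rewrite /a /aa; field; rewrite gt_eqF.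
  rewrite ab.
  have := @taylor1 _ _ _ Hc.1 Hc.2 a (a - dl / lam).
  rewrite [a - _ - a]addrC addKr => /ler_normlP[_ T1].
  have T2 : lam * (c (a - dl / lam) - c a - c' a * - (dl / lam)) <=
            lam * (`|M| * (- (dl / lam)) ^+ 2).
    by rewrite ler_pM2l.
  have e1 : lam * (c (a - dl / lam) - c a - c' a * - (dl / lam)) =
            lam * c (a - dl / lam) - lam * c a + dl * c' a.
    by field; rewrite gt_eqF.
  have e2 : lam * (`|M| * (- (dl / lam)) ^+ 2) = k * dl ^+ 2.
    by rewrite /k; field; rewrite gt_eqF.
  rewrite e1 e2 in T2.
  have e3 : dl * c' a = c' a * dl by rewrite mulrC.
  lra.
have k0 : 0 <= k by rewrite /k divr_ge0 // ltW.
have A : W - 1 <= 0.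
  apply: (@le0_of_small _ _ k) => t t0.
  have := key t; rewrite -(ler_pM2l t0) => h.
  rewrite -(ler_pM2l t0); nra.
have B : 1 - W <= 0.
  apply: (@le0_of_small _ _ k) => t t0.
  have := key (- t); rewrite -(ler_pM2l t0) => h.
  rewrite -(ler_pM2l t0); nra.
lra.
Qed.

Lemma lip_bound x y xi : X x -> X y ->
  `|loss y xi - loss x xi| <= `|G| * enorm (y - x).
Proof.
move=> Xx Xy; apply: (le_trans (Hlip xi Xy Xx)).
by apply: ler_wpM2r; [exact: enorm_ge0 | exact: real_ler_norm (num_real G)].
Qed.

Lemma lip_sq x y xi : X x -> X y ->
  (loss y xi - loss x xi) ^+ 2 <= (G * enorm (y - x)) ^+ 2.
Proof.
move=> Xx Xy; have h := Hlip xi Xy Xx.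
rewrite -real_normK ?num_real //; apply: lerXn2r; rewrite ?nnegrE //.
exact: le_trans h.
Qed.

Lemma Int_Phi x e y : X x -> X y ->
  Int P (fun xi => c' (aa x e xi) * (loss y xi - loss x xi)).
Proof.
move=> Xx Xy; apply: (@Int_Mb _ _ _ P _ _ (`|G| * enorm (y - x)) (Int_w e Xx)).
  exact: measurable_funB (mloss Xy) (mloss Xx).
by move=> xi; apply: lip_bound.
Qed.

Lemma lowb x e y e' : X x -> X y -> (forall e'', F x e <= F x e'') ->
  F x e + Ri P (fun xi => c' (aa x e xi) * (loss y xi - loss x xi)) <= F y e'.
Proof.
move=> Xx Xy Hmin.
have W1 := @foc x e Xx Hmin.
have iw := Int_w e Xx.
have iP := Int_Phi e Xx Xy.
have i3 : Int P (fun xi => (e - e') * c' (aa x e xi) - (e - e')).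
  exact: Int_B (Int_Z _ iw) (Int_cst P _).
have i12 := Int_D (Int_g e Xx) iP.
have -> : F x e + Ri P (fun xi => c' (aa x e xi) * (loss y xi - loss x xi)) =
  Ri P (fun xi => (lam * c (aa x e xi) + e) +
     c' (aa x e xi) * (loss y xi - loss x xi) +
     ((e - e') * c' (aa x e xi) - (e - e'))).
  rewrite (Ri_D i12 i3) (Ri_D (Int_g e Xx) iP) (Ri_B (Int_Z _ iw) (Int_cst P _)).
  by rewrite (Ri_Z _ iw) W1 Ri_cst mulr1 subrr addr0.
rewrite F_E; apply: Ri_le; [exact: Int_D i12 i3 | exact: Int_g | ].
move=> xi.
set a := aa x e xi; set b := aa y e' xi.
have Tg := @conj_tangent _ psi M psi0 fin Hc a b.
have T2 : lam * (c a + c' a * (b - a)) <= lam * c b by rewrite ler_pM2l.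
have e1 : lam * (c a + c' a * (b - a)) =
    lam * c a + c' a * (loss y xi - loss x xi) + ((e - e') * c' a).
  by rewrite /b /a /aa; field; rewrite gt_eqF.
rewrite e1 in T2.
lra.
Qed.

Lemma upb x e y : X x -> X y ->
  `|F y e - F x e - Ri P (fun xi => c' (aa x e xi) * (loss y xi - loss x xi))|
    <= `|M| / lam * (G * enorm (y - x)) ^+ 2.
Proof.
move=> Xx Xy.
have iP := Int_Phi e Xx Xy.
have iB := Int_B (Int_g e Xy) (Int_g e Xx).
rewrite !F_E -(Ri_B (Int_g e Xy) (Int_g e Xx)) -(Ri_B iB iP).
rewrite -[X in _ <= X](Ri_cst P).
apply: Ri_abs_le; [exact: Int_B iB iP | exact: Int_cst | ].
move=> xi.
set a := aa x e xi; set b := aa y e xi.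
have T1 := @taylor1 _ _ _ Hc.1 Hc.2 a b.
have e1 : lam * c b + e - (lam * c a + e) - c' a * (loss y xi - loss x xi) =
          lam * (c b - c a - c' a * (b - a)).
  by rewrite /b /a /aa; field; rewrite gt_eqF.
rewrite e1 normrM (gtr0_norm lam0).
apply: (le_trans (ler_wpM2l (ltW lam0) T1)).
have e2 : lam * (`|M| * (b - a) ^+ 2) = `|M| / lam * (loss y xi - loss x xi) ^+ 2.
  by rewrite /b /a /aa; field; rewrite gt_eqF.
rewrite e2; apply: ler_wpM2l; first by rewrite divr_ge0 // ltW.
exact: lip_sq.
Qed.

Local Notation Psi := (dro_Psi P psi lam loss).

Lemma Psi_le y e0 : (exists m, forall e', F y m <= F y e') -> Psi y <= F y e0.
Proof.
move=> [m Hm]; apply: ge_inf; last by exists e0.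
by exists (F y m) => z [e' _ <-].
Qed.

Lemma Psi_ge y v : (forall e', v <= F y e') -> v <= Psi y.
Proof.
move=> Hv; apply: lb_le_inf; first by exists (F y 0), 0.
by move=> z [e' _ <-].
Qed.

Section Deriv.
Variables (x : 'rV[R]_d) (r : R).
Hypothesis r0 : 0 < r.
Hypothesis HB : forall h, `|h| < r -> X (x + h).

Let Xx : X x.
Proof. by rewrite -[x]addr0; apply: HB; rewrite normr0. Qed.

Lemma meas_dl h : measurable_fun setT (fun xi => 'd (fun y => loss y xi) x h).
Proof.
apply: (measurable_fun_cvg
  (h := fun n xi => (loss (x + (sc r h * harmonic n) *: h) xi - loss x xi)
                     / (sc r h * harmonic n))).
  move=> n.
  have t0 : 0 < sc r h * harmonic n by rewrite mulr_gt0 ?sc_gt0 ?harmonic_gt0.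
  have ts : sc r h * harmonic n <= sc r h.
    rewrite ler_piMr ?harmonic_ge0 //=; first (by apply: ltW; apply: sc_gt0); by rewrite invf_le1 // ler1n.
  have Xt : X (x + (sc r h * harmonic n) *: h).
    by apply: HB; apply: sc_small => //; rewrite t0 ts.
  apply: (meas_M (f := fun xi => loss (x + (sc r h * harmonic n) *: h) xi - loss x xi)).
    exact: measurable_funB (mloss Xt) (mloss Xx).
  exact: measurable_cst.
by move=> xi _; exact: (@loss_dcvg _ _ X L (fun y => loss y xi) x r (Hsm xi) r0 HB h).
Qed.

Lemma Int_wdl e h :
  Int P (fun xi => c' (aa x e xi) * 'd (fun y => loss y xi) x h).
Proof.
apply: (@Int_Mb _ _ _ P _ _ ((sc r h)^-1 * @Bd R d G L r) (Int_w e Xx) (meas_dl h)).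
by move=> xi; exact: (@loss_dbound _ _ X G L (fun y => loss y xi) x r (Hlip xi) (Hsm xi) r0 HB h).
Qed.

Definition Dfun e h := Ri P (fun xi => c' (aa x e xi) * 'd (fun y => loss y xi) x h).

Lemma Dfun_lin e : linear (Dfun e).
Proof.
move=> a u v; rewrite /Dfun.
rewrite (@Ri_ext _ _ _ P _ (fun xi => a * (c' (aa x e xi) * 'd (fun y => loss y xi) x u)
     + c' (aa x e xi) * 'd (fun y => loss y xi) x v)); last first.
  by move=> xi; rewrite linearP /= mulrDr mulrCA.
by rewrite (Ri_D (Int_Z a (Int_wdl e u)) (Int_wdl e v)) (Ri_Z a (Int_wdl e u)).
Qed.

Lemma enorm_sq_le (h : 'rV[R]_d) : enorm h ^+ 2 <= d%:R ^+ 2 * `|h| ^+ 2.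
Proof.
rewrite -exprMn; apply: lerXn2r; rewrite ?nnegrE ?enorm_ge0 ?mulr_ge0 //.
exact: enorm_le.
Qed.

Lemma key_diff e : (forall e', F x e <= F x e') ->
  (forall y, X y -> exists m, forall e', F y m <= F y e') ->
  differentiable (fun y => F y e) x /\ differentiable Psi x /\
  'd Psi x = 'd (fun y => F y e) x.
Proof.
move=> Hmin Hex.
pose D : {linear 'rV[R]_d -> R} :=
  HB.pack (Dfun e) (GRing.isLinear.Build _ _ _ _ (Dfun e) (Dfun_lin e)).
have iw := Int_w e Xx.
have iaw := Int_abs iw.
set Wa := Ri P (fun xi => `|c' (aa x e xi)|).
have Wa0 : 0 <= Wa by rewrite /Wa /Ri; apply: Rintegral_ge0 => ? _.
set B := @Bd R d G L r.
have cD : continuous D.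
  apply/linear_bounded_continuous.
  apply: filterS (nbhs_pinfty_ge (num_real (Wa * B))) => K0 hK0.
  apply/nbhs_ballP; exists r => // h; rewrite -ball_normE /= sub0r normrN => hr.
  apply: le_trans hK0; rewrite mulrC.
  rewrite -(Ri_Z B iaw).
  apply: Ri_abs_le; [exact: Int_wdl | exact: Int_Z | ].
  move=> xi; rewrite normrM mulrC; apply: ler_wpM2r => //.
  apply: (le_trans (@loss_dbound_small _ _ X G L (fun y => loss y xi) x r
     (Hlip xi) (Hsm xi) r0 HB h hr)).
  have en : enorm h <= d%:R * r.
    apply: (le_trans (enorm_le _)); apply: ler_wpM2l => //; exact: ltW.
  rewrite /B /Bd; apply: lerD; apply: ler_wpM2l => //.
  by apply: lerXn2r; rewrite ?nnegrE ?enorm_ge0 ?mulr_ge0 // ltW.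
set KA := (`|M| / lam * G ^+ 2 + `|L| * Wa) * d%:R ^+ 2.
have kM : 0 <= `|M| / lam * G ^+ 2 by rewrite mulr_ge0 ?sqr_ge0 // divr_ge0 // ltW.
have A h : `|h| < r -> `|F (x + h) e - F x e - D h| <= KA * `|h| ^+ 2.
  move=> hr; have Xh := HB _ hr.
  have U := upb e Xx Xh.
  have hx : x + h - x = h by rewrite addrC addKr.
  rewrite hx exprMn in U.
  have Q : `|Ri P (fun xi => c' (aa x e xi) * (loss (x + h) xi - loss x xi)) - D h|
           <= (`|L| * enorm h ^+ 2) * Wa.
    rewrite /= /Dfun -(Ri_B (Int_Phi e Xx Xh) (Int_wdl e h)) -(Ri_Z _ iaw).
    apply: Ri_abs_le; [exact: Int_B (Int_Phi e Xx Xh) (Int_wdl e h) | exact: Int_Z | ].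
    move=> xi; rewrite -mulrBr normrM mulrC; apply: ler_wpM2r => //.
    exact: (@loss_taylor _ _ X L (fun y => loss y xi) x r (Hsm xi) r0 HB h hr).
  set Phi := Ri P _ in U Q.
  have -> : F (x + h) e - F x e - D h = (F (x + h) e - F x e - Phi) + (Phi - D h).
    by ring.
  apply: (le_trans (ler_normD _ _)); apply: (le_trans (lerD U Q)).
  have -> : `|M| / lam * (G ^+ 2 * enorm h ^+ 2) + `|L| * enorm h ^+ 2 * Wa =
            (`|M| / lam * G ^+ 2 + `|L| * Wa) * enorm h ^+ 2 by ring.
  rewrite /KA -[X in _ <= X]mulrA; apply: ler_wpM2l; first by apply: addr_ge0; [exact: kM | exact: mulr_ge0].
  exact: enorm_sq_le.
have [dF dFe] := @diff_quad R _ (fun y => F y e) D x KA r cD r0 A.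
have Px : Psi x = F x e.
  apply/le_anti/andP; split; first exact: Psi_le (Hex x Xx).
  exact: Psi_ge.
set KB := KA + `|M| / lam * G ^+ 2 * d%:R ^+ 2.
have Bb h : `|h| < r -> `|Psi (x + h) - Psi x - D h| <= KB * `|h| ^+ 2.
  move=> hr; have Xh := HB _ hr.
  have U := upb e Xx Xh.
  have hx : x + h - x = h by rewrite addrC addKr.
  rewrite hx exprMn in U.
  have p1 := @Psi_le (x + h) e (Hex _ Xh).
  have p2 : F x e + Ri P (fun xi => c' (aa x e xi) * (loss (x + h) xi - loss x xi))
            <= Psi (x + h).
    by apply: Psi_ge => e'; exact: lowb.
  set Phi := Ri P _ in U p2.
  have A' := A h hr.
  have ee : `|M| / lam * (G ^+ 2 * enorm h ^+ 2) <=
            `|M| / lam * G ^+ 2 * d%:R ^+ 2 * `|h| ^+ 2.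
    apply: (le_trans (y := `|M| / lam * (G ^+ 2 * (d%:R ^+ 2 * `|h| ^+ 2)))).
      apply: ler_wpM2l; first by rewrite divr_ge0 // ltW.
      by apply: ler_wpM2l; [exact: sqr_ge0 | exact: enorm_sq_le].
    by rewrite le_eqVlt; apply/orP; left; apply/eqP; ring.
  rewrite Px /KB mulrDl.
  move: U A' => /ler_normlP[U1 U2] /ler_normlP[A1 A2].
  apply/ler_normlP; split; lra.
have [dP dPe] := @diff_quad R _ Psi D x KB r cD r0 Bb.
by split => //; split => //; apply: linear_ext; rewrite dPe dFe.
Qed.

End Deriv.

End H7.


Unset Implicit Arguments.

Theorem lemma2p6 (R : realType) (d : nat) (d0 : measure_display)
    (T : measurableType d0) (P : probability T R)
    (X : set 'rV[R]_d) (lam G L M : R)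
    (loss : 'rV[R]_d -> T -> R) (psi : R -> \bar R) :
  open X ->
  0 < lam ->
  (* (i) loss is G-Lipschitz and L-smooth on X for every xi *)
  (forall xi, eucl_lipschitz_on G X (fun x => loss x xi)) ->
  (forall xi, eucl_smooth_on L X (fun x => loss x xi)) ->
  (* (ii) psi : R -> [0,+oo] convex, psi 1 = 0, psi = +oo on (-oo,0) *)
  (forall t, (0 <= psi t)%E) ->
  convex_ext psi ->
  psi 1 = 0%E ->
  (forall t, t < 0 -> psi t = +oo%E) ->
  (* psi^* is (finite and) M-smooth *)
  (forall t, conj_ext psi t \is a fin_num) ->
  smooth1_real M (conj_real psi) ->
  (* standing well-posedness: the expectation defining L is finite *)
  (forall x, X x -> measurable_fun [set: T] (loss x)) ->
  (forall x eta, X x ->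
     P.-integrable [set: T]
       (fun xi => (lam * conj_real psi ((loss x xi - eta) / lam) + eta)%:E)) ->
  (* Psi(x) = min_eta L(x, eta): the minimum is attained *)
  (forall x, X x -> exists eta, forall eta',
       dro_L P psi lam loss x eta <= dro_L P psi lam loss x eta') ->
  forall x, X x ->
    differentiable (dro_Psi P psi lam loss) x /\
    forall eta, (forall eta', dro_L P psi lam loss x eta <= dro_L P psi lam loss x eta') ->
      differentiable (fun y => dro_L P psi lam loss y eta) x /\
      'd (dro_Psi P psi lam loss) x = 'd (fun y => dro_L P psi lam loss y eta) x.
Proof.
move=> Xo lam0 Hlip Hsm psi0 _ _ _ fin Hc mloss Hint Hex x Xx.
have [r r0 HB] : exists2 r, 0 < r & forall h, `|h| < r -> X (x + h).
  have := Xo x Xx; move/nbhs_ballP => [r r0 Hr]; exists r => // h hr.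
  by apply: Hr; rewrite -ball_normE /= opprD addrA subrr sub0r normrN.
have [e0 He0] := Hex x Xx.
split.
  by have [_ [H _]] := key_diff P lam loss lam0 Hlip Hsm psi0 fin Hc mloss Hint x r r0 HB e0 He0 Hex.
move=> eta Heta.
have [H1 [_ H3]] := key_diff P lam loss lam0 Hlip Hsm psi0 fin Hc mloss Hint x r r0 HB eta Heta Hex.
by split.
Qed.
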